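(* Every instance of 2-SBCM has a solution with at most one block crossing before each meeting (i.e., $|B_i|\le 1$ for all $i$); in particular, it has a solution with at most $n$ block crossings in total, where $n$ is the number of meetings.
   Context: A storyline instance is a pair $(C,M)$ where $C=\{1,\dots,k\}$ is a set of characters and $M=[m_1,\dots,m_n]$ is a sequence of meetings with $m_i\subseteq C$; in 2-SBCM every meeting has exactly two characters. A permutation of $C$ lists each character exactly once. For $1\le a\le b<c\le k$, the block crossing $(a,b,c)$ maps $\langle \pi_1,\dots,\pi_k\rangle$ to $\langle \pi_1,\dots,\pi_{a-1},\pi_{b+1},\dots,\pi_c,\pi_a,\dots,\pi_b,\pi_{c+1},\dots,\pi_k\rangle$. A meeting fits (is supported by) a permutation if its characters occupy consecutive positions. A solution is a start permutation $\pi^0$ and sequences $B_1,\dots,B_n$ of block crossings (possibly empty) such that, with $\pi^i$ obtained by applying $B_i$ in order to $\pi^{i-1}$, $\pi^i$ supports $m_i$ for all $i$. *)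

(* Defs.v *)
From mathcomp Require Import all_boot.
Set Implicit Arguments. Unset Strict Implicit. Unset Printing Implicit Defensive.

(* Characters are 'I_k (0-indexed names); positions in a permutation are
   1-indexed as in the paper: position p holds nth _ pi (p-1). *)

Definition is_perm (k : nat) (pi : seq 'I_k) : bool := perm_eq pi (enum 'I_k).

Definition block_crossing := (nat * nat * nat)%type.

Definition valid_bc (k : nat) (bc : block_crossing) : bool :=
  let: (a, b, c) := bc in [&& 1 <= a, a <= b, b < c & c <= k].

(* <pi_1..pi_{a-1}, pi_{b+1}..pi_c, pi_a..pi_b, pi_{c+1}..pi_k> *)
Definition apply_bc (T : Type) (bc : block_crossing) (pi : seq T) : seq T :=
  let: (a, b, c) := bc in
  take a.-1 pi ++ take (c - b) (drop b pi) ++ take (b - a.-1) (drop a.-1 pi)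
    ++ drop c pi.

Definition apply_bcs (T : Type) (B : seq block_crossing) (pi : seq T) : seq T :=
  foldl (fun p bc => apply_bc bc p) pi B.

Definition supports (k : nat) (pi : seq 'I_k) (m : 'I_k * 'I_k) : bool :=
  ((index m.1 pi).+1 == index m.2 pi) || ((index m.2 pi).+1 == index m.1 pi).

Fixpoint perms_from (k : nat) (pi : seq 'I_k) (Bs : seq (seq block_crossing))
  : seq (seq 'I_k) :=
  match Bs with
  | [::] => [::]
  | B :: Bs' => let pi' := apply_bcs B pi in pi' :: perms_from pi' Bs'
  end.

Definition is_solution (k : nat) (M : seq ('I_k * 'I_k))
  (pi0 : seq 'I_k) (Bs : seq (seq block_crossing)) : Prop :=
  [/\ is_perm pi0,
      size Bs = size M,
      all (all (valid_bc k)) Bs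
    & all2 (fun pi m => supports pi m) (perms_from pi0 Bs) M].

(* Main.v *)
Require Import Defs.
From mathcomp Require Import all_boot.

Lemma step_lt (k : nat) (s : seq 'I_k) (x y : 'I_k) :
  is_perm s -> x \in s -> y \in s -> (index x s).+1 < index y s ->
  let bc := ((index x s).+2, index y s, (index y s).+1) in
  [/\ valid_bc k bc, is_perm (apply_bc bc s) &
      supports (apply_bc bc s) (x, y)].
Proof.
move=> hp xs ys hij /=.
have hsz : size s = k by rewrite (perm_size hp) size_enum_ord.
set i := index x s in hij *; set j := index y s in hij *.
have hj : j < size s by rewrite /j index_mem.
have hd : drop j s = y :: drop j.+1 s by rewrite (drop_nth y hj) nth_index.
have e1 : j.+1 - j = 1 by rewrite subSnn.
have e2 : take (j.+1 - j) (drop j s) = [:: y] by rewrite subSnn hd /= take0.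
rewrite e2 /=.
set A := take i.+1 s; set Mid := take (j - i.+1) (drop i.+1 s).
have hs : s = A ++ Mid ++ y :: drop j.+1 s.
  rewrite -hd /A /Mid -[drop j s](_ : drop (j - i.+1) (drop i.+1 s) = _).
    by rewrite !cat_take_drop.
  by rewrite drop_drop subnK // ltnW.
have xA : x \in A by rewrite /A in_take // /i ltnSn.
have yA : y \notin A by rewrite /A in_take // -/j -leqNgt ltnW.
have ixA : index x A = i by rewrite /i; rewrite {1}hs index_cat xA.
have szA : size A = i.+1 by rewrite /A size_take; case: ifP => // /negbT; rewrite -leqNgt => h; apply/eqP; rewrite eqn_leq h /=; apply: leq_trans (ltnW hj); apply: ltnW.
split.
- rewrite /valid_bc /= -hsz hj andbT; apply/andP; split => //.
- rewrite /is_perm; apply: (perm_trans _ hp); rewrite [X in perm_eq _ X]hs perm_cat2l /= -cat1s perm_catCA perm_refl.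
  done.
  
- rewrite /supports /= index_cat xA ixA index_cat (negbTE yA) /= eqxx szA addn0.
  by rewrite eqxx.
Qed.

Lemma supports_sym (k : nat) (s : seq 'I_k) (x y : 'I_k) :
  supports s (x, y) = supports s (y, x).
Proof. by rewrite /supports /= orbC. Qed.

Lemma step (k : nat) (s : seq 'I_k) (x y : 'I_k) :
  is_perm s -> x != y ->
  exists B, [/\ size B <= 1, all (valid_bc k) B, is_perm (apply_bcs B s)
                & supports (apply_bcs B s) (x, y)].
Proof.
move=> hp nxy.
have mem z : z \in s by rewrite (perm_mem hp) mem_enum.
case hs: (supports s (x, y)); first by exists [::].
have nij : index x s != index y s.
  apply: contra nxy => /eqP e.
  by rewrite -(nth_index x (mem x)) e nth_index // mem.
have /norP [h1 h2] : ~~ supports s (x, y) by rewrite hs.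
rewrite /= in h1 h2.
case: (ltngtP (index x s) (index y s)) nij => // hlt _.
- have hl : (index x s).+1 < index y s by rewrite ltn_neqAle h1 hlt.
  have [v p sp] := @step_lt k s x y hp (mem x) (mem y) hl.
  exists [:: ((index x s).+2, index y s, (index y s).+1)]; split; [by [] | exact: (introT andP (conj v isT)) | exact: p | exact: sp].
- have hl : (index y s).+1 < index x s by rewrite ltn_neqAle h2 hlt.
  have [v p sp] := @step_lt k s y x hp (mem y) (mem x) hl.
  by exists [:: ((index y s).+2, index x s, (index x s).+1)]; split; [by [] | exact: (introT andP (conj v isT)) | exact: p | by rewrite supports_sym].
Qed.

Lemma gen (k : nat) (M : seq ('I_k * 'I_k)) :
  all (fun m => m.1 != m.2) M -> forall pi, is_perm pi ->
  exists Bs : seq (seq block_crossing),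
    [/\ size Bs = size M, all (all (valid_bc k)) Bs,
        all2 (fun pi m => supports pi m) (perms_from pi Bs) M
      & all (fun B => size B <= 1) Bs].
Proof.
elim: M => [|[x y] M IH] /= hM pi hp; first by exists [::].
case/andP: hM => nxy hM.
have [B [sB vB pB spB]] := @step k pi x y hp nxy.
have [Bs [e1 e2 e3 e4]] := IH hM _ pB.
by exists (B :: Bs); split; rewrite /= ?e1 ?vB ?spB ?sB.
Qed.

Lemma sumn_le (Bs : seq (seq block_crossing)) :
  all (fun B => size B <= 1) Bs -> sumn (map size Bs) <= size Bs.
Proof.
elim: Bs => //= B Bs IH /andP [h1 h2].
by rewrite -add1n leq_add // IH.
Qed.

Theorem mainTheorem13 (k : nat) (M : seq ('I_k * 'I_k))
  (hM : all (fun m => m.1 != m.2) M) :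
  exists (pi0 : seq 'I_k) (Bs : seq (seq block_crossing)),
    [/\ is_solution M pi0 Bs,
        all (fun B => size B <= 1) Bs
      & sumn (map size Bs) <= size M].
Proof.
have hp : is_perm (enum 'I_k) by rewrite /is_perm perm_refl.
have [Bs [e1 e2 e3 e4]] := @gen k M hM _ hp.
exists (enum 'I_k), Bs; split => //.
by rewrite -e1 sumn_le.
Qed.
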